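(* Let $L>0$, $K>0$, $L_p a>0$, $t_0>0$, $\nu_m>0$, and let $\sigma_1,\sigma_2,p_0,w_0,w_D,q_l$ be real constants. Put $\beta = \frac{L_p a L^2}{K}$. Let $p,u,w$ be twice continuously differentiable functions on $[0,1]$ satisfying $$\frac{1}{t_0}\frac{d}{dx}\Big(\nu_m \frac{dp}{dx}\Big) - \sigma_1\frac{d}{dx}\Big(\nu_m \frac{du}{dx}\Big) - \sigma_2\frac{d}{dx}\Big(\nu_m\frac{dw}{dx}\Big) + q_U - q_l = 0 \quad\text{on } [0,1],$$ where $$q_U(x) = \beta\Big(\frac{1}{t_0}(p_0-p(x)) + \sigma_1 u(x) + \sigma_2 (w(x)-w_0)\Big),$$ together with the boundary conditions $p(0)=1$, $u(0)=1$, $w(0)=w_D$, $p'(1)=u'(1)=w'(1)=0$. Define $$j_U(x) = L\nu_m\Big(-\frac{1}{t_0}p'(x) + \sigma_1 u'(x) + \sigma_2 w'(x)\Big).$$ Then $j_U = \frac{K\nu_m}{L_p a L}\, q_U'$ and, with $$\lambda=\sqrt{\frac{L_p a L^2}{K\nu_m}},\quad q_0 = \beta\Big(\frac{1}{t_0}(p_0-1)+\sigma_1+\sigma_2 (w_D - w_0)\Big),\quad C_1=(q_0-q_l)\frac{e^{2\lambda}}{1+e^{2\lambda}},\quad C_2=(q_0-q_l)\frac{1}{1+e^{2\lambda}},$$ one has for all $x\in[0,1]$ $$q_U(x) = C_1 e^{-\lambda x} + C_2 e^{\lambda x} + q_l,\qquad j_U(x) = \frac{L}{\lambda}\big(-C_1e^{-\lambda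 x}+C_2 e^{\lambda x}\big).$$
   Context: This is the steady-state fluid balance equation of a non-dimensionalised model of fluid, glucose and albumin transport in peritoneal dialysis, under the assumptions that the reflection coefficients in tissue and capillary wall coincide ($S_G=S_{TG}$, $S_A=S_{TA}$) and that the fractional void volume $\nu$ equals the constant $\nu_m$. Here $x\in[0,1]$ is the non-dimensional distance from the peritoneal surface, $p$ the non-dimensional hydrostatic pressure, $u$ and $w$ non-dimensional glucose and albumin concentrations, $q_U$ the density of fluid flux from blood to tissue, $j_U$ the fluid flux across the tissue, $q_l$ the lymphatic flux density; $w_D$ is the non-dimensional albumin concentration in dialysate and $w_0$ that in blood. *)

(* Defs.v *)
From Stdlib Require Import Reals.
From Coquelicot Require Import Coquelicot.
Open Scope R_scope.

(* f is twice continuously differentiable at every point of [0,1]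
   (derivatives in the two-sided sense of Coquelicot). *)
Definition C2_on_01 (f : R -> R) : Prop :=
  forall x, 0 <= x <= 1 ->
    ex_derive f x /\ ex_derive (Derive f) x /\ continuous (Derive (Derive f)) x.

Definition qU (beta t0 sigma1 sigma2 p0 w0 : R) (p u w : R -> R) (x : R) : R :=
  beta * ((1 / t0) * (p0 - p x) + sigma1 * u x + sigma2 * (w x - w0)).

Definition jU (L nu_m t0 sigma1 sigma2 : R) (p u w : R -> R) (x : R) : R :=
  L * nu_m * (- (1 / t0) * Derive p x + sigma1 * Derive u x + sigma2 * Derive w x).

(* Main.v *)
Require Import Defs.
From Stdlib Require Import Reals Lra.
From Coquelicot Require Import Coquelicot.
Open Scope R_scope.

Lemma mvt01 (f df : R -> R) (a b : R) :
  (forall x, 0 <= x <= 1 -> is_derive f x (df x)) ->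
  0 <= a -> a <= b -> b <= 1 ->
  exists c, a <= c <= b /\ f b - f a = df c * (b - a).
Proof.
  intros Hd Ha Hab Hb.
  assert (E1 : Rmin a b = a) by (apply Rmin_left; lra).
  assert (E2 : Rmax a b = b) by (apply Rmax_right; lra).
  destruct (MVT_gen f a b df) as [c [Hc Hc']].
  - rewrite E1, E2. intros x Hx. apply Hd; lra.
  - rewrite E1, E2. intros x Hx. apply continuity_pt_filterlim.
    apply (ex_derive_continuous (K:=R_AbsRing) (V:=R_NormedModule)). eexists. apply Hd; lra.
  - exists c. rewrite E1, E2 in Hc. split; assumption.
Qed.

Lemma uniq01 (Q G S S' : R -> R) (k : R) :
  (forall x, 0 <= x <= 1 -> is_derive Q x (G x)) ->
  (forall x, 0 <= x <= 1 -> is_derive G x (k^2 * Q x)) ->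
  (forall x, 0 <= x <= 1 -> is_derive S x (S' x)) ->
  (forall x, 0 <= x <= 1 -> is_derive S' x (k^2 * S x)) ->
  Q 0 = S 0 -> G 1 = S' 1 ->
  forall x, 0 <= x <= 1 -> Q x = S x /\ G x = S' x.
Proof.
  intros HQ HG HS HS' H0 H1.
  set (D := fun y => Q y - S y).
  set (H := fun y => G y - S' y).
  set (F := fun y => D y * H y).
  assert (dD : forall x, 0 <= x <= 1 -> is_derive D x (H x)).
  { intros x Hx. unfold D, H. apply (is_derive_minus (K:=R_AbsRing) (V:=R_NormedModule) Q S x (G x) (S' x)); auto. }
  assert (dH : forall x, 0 <= x <= 1 -> is_derive H x (k^2 * D x)).
  { intros x Hx. unfold D, H.
    replace (k^2 * (Q x - S x)) with (k^2 * Q x - k^2 * S x) by ring.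
    apply (is_derive_minus (K:=R_AbsRing) (V:=R_NormedModule) G S' x (k^2 * Q x) (k^2*S x)); auto. }
  assert (dF : forall x, 0 <= x <= 1 -> is_derive F x (H x * H x + k^2 * (D x * D x))).
  { intros x Hx. unfold F.
    replace (H x * H x + k ^ 2 * (D x * D x)) with (H x * H x + D x * (k^2 * D x)) by ring.
    apply (is_derive_mult (K:=R_AbsRing) D H x (H x) (k^2*D x)); auto. intros; apply Rmult_comm. }
  assert (mono : forall a b, 0 <= a -> a <= b -> b <= 1 -> F a <= F b).
  { intros a b Ha Hab Hb.
    destruct (mvt01 F _ a b dF Ha Hab Hb) as [c [Hc Hc']].
    assert (0 <= H c * H c + k ^ 2 * (D c * D c)).
    { assert (0 <= H c * H c) by nra. assert (0 <= D c * D c) by nra.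
      assert (0 <= k^2) by nra. nra. }
    nra. }
  assert (F0 : F 0 = 0). { unfold F, D. rewrite H0. ring. }
  assert (F1 : F 1 = 0). { unfold F, H. rewrite H1. ring. }
  assert (Fz : forall c, 0 <= c <= 1 -> F c = 0).
  { intros c Hc. pose proof (mono 0 c ltac:(lra) ltac:(lra) ltac:(lra)).
    pose proof (mono c 1 ltac:(lra) ltac:(lra) ltac:(lra)). lra. }
  assert (Dz : forall x, 0 <= x <= 1 -> D x = 0).
  { intros x Hx.
    set (D2 := fun y => D y * D y).
    assert (dD2 : forall y, 0 <= y <= 1 -> is_derive D2 y (2 * F y)).
    { intros y Hy. unfold D2, F.
      replace (2 * (D y * H y)) with (H y * D y + D y * H y) by ring.
      apply (is_derive_mult (K:=R_AbsRing) D D y (H y) (H y)); auto. intros; apply Rmult_comm. }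
    destruct (mvt01 D2 _ 0 x dD2 ltac:(lra) ltac:(lra) ltac:(lra)) as [c [Hc Hc']].
    rewrite Fz in Hc' by lra. unfold D2 in Hc'.
    assert (D 0 = 0) by (unfold D; rewrite H0; ring). nra. }
  assert (Hz : forall x, 0 <= x <= 1 -> H x = 0).
  { intros x Hx.
    destruct (mvt01 H _ x 1 dH ltac:(lra) ltac:(lra) ltac:(lra)) as [c [Hc Hc']].
    rewrite Dz in Hc' by lra.
    assert (H 1 = 0) by (unfold H; rewrite H1; ring). nra. }
  intros x Hx. split.
  - pose proof (Dz x Hx). unfold D in *. lra.
  - pose proof (Hz x Hx). unfold H in *. lra.
Qed.

Lemma dqU beta t0 sigma1 sigma2 p0 w0 p u w y : ex_derive p y -> ex_derive u y -> ex_derive w y ->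
 is_derive (qU beta t0 sigma1 sigma2 p0 w0 p u w) y
  (beta * (- (1/t0) * Derive p y + sigma1 * Derive u y + sigma2 * Derive w y)).
Proof.
intros. unfold qU. auto_derive. auto. change (fun x => p x) with p; change (fun x => u x) with u; change (fun x => w x) with w. ring.
Qed.

Lemma dG beta t0 sigma1 sigma2 p u w y : ex_derive (Derive p) y -> ex_derive (Derive u) y -> ex_derive (Derive w) y ->
 is_derive (fun y => beta * (- (1/t0) * Derive p y + sigma1 * Derive u y + sigma2 * Derive w y)) y
  (beta * (- (1/t0) * Derive (Derive p) y + sigma1 * Derive (Derive u) y + sigma2 * Derive (Derive w) y)).
Proof.
intros. auto_derive. auto. change (fun x => Derive p x) with (Derive p); change (fun x => Derive u x) with (Derive u); change (fun x => Derive w x) with (Derive w). ring.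
Qed.

Theorem mainTheorem2
  (L K Lpa t0 nu_m sigma1 sigma2 p0 w0 wD ql : R)
  (HL : 0 < L) (HK : 0 < K) (HLpa : 0 < Lpa) (Ht0 : 0 < t0) (Hnu : 0 < nu_m)
  (p u w : R -> R)
  (Hp : C2_on_01 p) (Hu : C2_on_01 u) (Hw : C2_on_01 w)
  (Heq : forall x, 0 <= x <= 1 ->
     (1 / t0) * Derive (fun y => nu_m * Derive p y) x
     - sigma1 * Derive (fun y => nu_m * Derive u y) x
     - sigma2 * Derive (fun y => nu_m * Derive w y) x
     + qU (Lpa * L ^ 2 / K) t0 sigma1 sigma2 p0 w0 p u w x - ql = 0)
  (Hp0 : p 0 = 1) (Hu0 : u 0 = 1) (Hw0 : w 0 = wD)
  (Hp1 : Derive p 1 = 0) (Hu1 : Derive u 1 = 0) (Hw1 : Derive w 1 = 0) :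
  let beta := Lpa * L ^ 2 / K in
  let lambda := sqrt (Lpa * L ^ 2 / (K * nu_m)) in
  let q0 := beta * ((1 / t0) * (p0 - 1) + sigma1 + sigma2 * (wD - w0)) in
  let C1 := (q0 - ql) * (exp (2 * lambda) / (1 + exp (2 * lambda))) in
  let C2 := (q0 - ql) * (1 / (1 + exp (2 * lambda))) in
  forall x, 0 <= x <= 1 ->
    jU L nu_m t0 sigma1 sigma2 p u w x
      = K * nu_m / (Lpa * L) * Derive (qU beta t0 sigma1 sigma2 p0 w0 p u w) x
    /\ qU beta t0 sigma1 sigma2 p0 w0 p u w x
      = C1 * exp (- lambda * x) + C2 * exp (lambda * x) + ql
    /\ jU L nu_m t0 sigma1 sigma2 p u w x
      = L / lambda * (- C1 * exp (- lambda * x) + C2 * exp (lambda * x)).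
Proof.
  intros beta lambda q0 C1 C2 x Hx.
  assert (Hbeta : 0 < beta).
  { unfold beta. apply Rdiv_lt_0_compat; [|lra]. apply Rmult_lt_0_compat; [lra|]. apply pow_lt; lra. }
  assert (Hlpos : 0 < lambda).
  { unfold lambda. apply sqrt_lt_R0. apply Rdiv_lt_0_compat.
    apply Rmult_lt_0_compat; [lra|]. apply pow_lt; lra. apply Rmult_lt_0_compat; lra. }
  assert (Hl2 : beta = nu_m * (lambda * lambda)).
  { unfold lambda. rewrite sqrt_sqrt. unfold beta. field. lra.
    apply Rlt_le, Rdiv_lt_0_compat.
    apply Rmult_lt_0_compat; [lra|]. apply pow_lt; lra. apply Rmult_lt_0_compat; lra. }
  set (G := fun y => beta * (- (1/t0) * Derive p y + sigma1 * Derive u y + sigma2 * Derive w y)).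
  set (Q := fun y => qU beta t0 sigma1 sigma2 p0 w0 p u w y - ql).
  set (S := fun y => C1 * exp (- lambda * y) + C2 * exp (lambda * y)).
  set (S' := fun y => lambda * (- C1 * exp (- lambda * y) + C2 * exp (lambda * y))).
  assert (dqU' : forall y, 0 <= y <= 1 -> is_derive (qU beta t0 sigma1 sigma2 p0 w0 p u w) y (G y)).
  { intros y Hy. destruct (Hp y Hy) as [a1 _]. destruct (Hu y Hy) as [a2 _].
    destruct (Hw y Hy) as [a3 _]. apply dqU; auto. }
  assert (dQ : forall y, 0 <= y <= 1 -> is_derive Q y (G y)).
  { intros y Hy. unfold Q. 
    apply (is_derive_ext (fun z => qU beta t0 sigma1 sigma2 p0 w0 p u w z + (- ql))).
    intros; reflexivity.
    replace (G y) with (G y + 0) by ring.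
    apply (is_derive_plus (K:=R_AbsRing) (V:=R_NormedModule)); auto.
    apply (is_derive_const (K:=R_AbsRing) (V:=R_NormedModule) (-ql)). }
  assert (dGG : forall y, 0 <= y <= 1 -> is_derive G y (lambda^2 * Q y)).
  { intros y Hy. destruct (Hp y Hy) as [_ [a1 _]]. destruct (Hu y Hy) as [_ [a2 _]].
    destruct (Hw y Hy) as [_ [a3 _]].
    pose proof (Heq y Hy) as E. rewrite !Derive_scal in E.
    fold beta in E.
    replace (lambda ^ 2 * Q y) with
      (beta * (- (1/t0) * Derive (Derive p) y + sigma1 * Derive (Derive u) y + sigma2 * Derive (Derive w) y)).
    apply dG; auto.
    unfold Q.
    replace (qU beta t0 sigma1 sigma2 p0 w0 p u w y - ql) with
      (-(1 / t0 * (nu_m * Derive (Derive p) y) - sigma1 * (nu_m * Derive (Derive u) y) -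
       sigma2 * (nu_m * Derive (Derive w) y))) by lra.
    rewrite Hl2. field. lra. }
  assert (dS : forall y, 0 <= y <= 1 -> is_derive S y (S' y)).
  { intros y _. unfold S, S'. auto_derive. auto. ring. }
  assert (dS' : forall y, 0 <= y <= 1 -> is_derive S' y (lambda^2 * S y)).
  { intros y _. unfold S, S'. auto_derive. auto. ring. }
  assert (Hexp : 0 < exp lambda) by apply exp_pos.
  assert (E2 : exp (2 * lambda) = exp lambda * exp lambda).
  { rewrite <- exp_plus. f_equal. ring. }
  assert (Q0 : Q 0 = S 0).
  { unfold Q, S, qU, C1, C2, q0. rewrite Hp0, Hu0, Hw0.
    replace (- lambda * 0) with 0 by ring. replace (lambda * 0) with 0 by ring.
    rewrite exp_0. field. rewrite E2. nra. }
  assert (G1 : G 1 = S' 1).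
  { unfold G, S', C1, C2. rewrite Hp1, Hu1, Hw1. rewrite !Rmult_1_r, E2, exp_Ropp.
    field. split; [nra|lra]. }
  destruct (uniq01 Q G S S' lambda dQ dGG dS dS' Q0 G1 x Hx) as [EQ EG].
  assert (DqU : Derive (qU beta t0 sigma1 sigma2 p0 w0 p u w) x = G x).
  { apply is_derive_unique. auto. }
  assert (JU : jU L nu_m t0 sigma1 sigma2 p u w x = K * nu_m / (Lpa * L) * G x).
  { unfold jU, G, beta. field. lra. }
  split; [|split].
  - rewrite DqU. exact JU.
  - unfold Q, S in EQ. lra.
  - rewrite JU, EG. unfold S'.
    replace (K * nu_m / (Lpa * L)) with (L * nu_m / beta) by (unfold beta; field; lra).
    rewrite Hl2. field. lra.
Qed.
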